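(* Let $X$ be a locally finite poset with a unique minimal element $0$ and let $g:X\to L^+$ be isotone. Then the set of functions $f:X\to L^+$ satisfying $g(x)=\bigvee_{y\le x}f(y)$ for all $x\in X$ is exactly the interval $[m_*,m^*]=\{f: m_*(x)\le f(x)\le m^*(x)\ \forall x\in X\}$, where $m^*(x)=g(x)$ for all $x$, and $m_*(x)=g(x)$ if $g(x)>g(y)$ for all $y\prec x$, $m_*(x)=\mathbb{O}$ otherwise.
   Context: $(L^+,\le)$ is a totally ordered set with bottom $\mathbb{O}$ and top $\mathbb{1}$. $X$ locally finite means every interval $[u,v]=\{x:u\le x\le v\}$ is finite. $y\prec x$ means $x$ covers $y$ ($y<x$ and no element strictly between). Isotone means order preserving. *)

(* Defs.v *)
From HB Require Import structures.
From mathcomp Require Import all_boot all_order.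
From Stdlib Require Import ClassicalDescription.
Set Implicit Arguments. Unset Strict Implicit. Unset Printing Implicit Defensive.
Import Order.TTheory.
Local Open Scope order_scope.

Definition locally_finite (d : Order.disp_t) (X : porderType d) : Prop :=
  forall u v : X, exists s : seq X, forall x : X, u <= x <= v -> x \in s.

Definition covers (d : Order.disp_t) (X : porderType d) (y x : X) : Prop :=
  y < x /\ ~ (exists z : X, y < z /\ z < x).

Definition isotone (d : Order.disp_t) (X : porderType d)
  (d' : Order.disp_t) (L : porderType d') (g : X -> L) : Prop :=
  forall x y : X, x <= y -> g x <= g y.

(* g(x) = \bigvee_{y <= x} f(y): the finite join over the down-set of x,
   computed along any list s enumerating (a superset of) the down-set. *)
Definition join_below (d : Order.disp_t) (X : porderType d)
  (d' : Order.disp_t) (L : tbOrderType d') (f : X -> L) (x : X) (v : L) : Prop :=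
  forall s : seq X, (forall y : X, y <= x -> y \in s) ->
    v = \join_(y <- s | y <= x) f y.

Definition m_upper (d : Order.disp_t) (X : porderType d)
  (d' : Order.disp_t) (L : tbOrderType d') (g : X -> L) : X -> L := g.

Definition m_lower (d : Order.disp_t) (X : porderType d)
  (d' : Order.disp_t) (L : tbOrderType d') (g : X -> L) (x : X) : L :=
  if excluded_middle_informative (forall y : X, covers y x -> g y < g x)
  then g x else \bot.

(* Main.v *)
Require Import Defs.
From HB Require Import structures.
From mathcomp Require Import all_boot all_order.
From Stdlib Require Import Classical ClassicalDescription.
Import Order.TTheory.
Local Open Scope order_scope.

Lemma count_lt (T : eqType) (p q : pred T) (s : seq T) (a : T) :
  (forall w, p w -> q w) -> a \in s -> q a -> ~~ p a -> (count p s < count q s)%N.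
Proof.
move=> pq; elim: s => [//|b s IH]; rewrite inE => /orP [/eqP <-|ains] qa npa /=.
  rewrite qa (negbTE npa) add0n add1n ltnS.
  by apply: sub_count => w; apply: pq.
have := IH ains qa npa.
case: (boolP (p b)) => pb; first by rewrite (pq _ pb) /= !add1n ltnS.
by rewrite add0n => h; apply: (leq_trans h); apply: leq_addl.
Qed.

Lemma cover_exists (d : Order.disp_t) (X : porderType d) (x : X) (s : seq X) :
  (forall z, z <= x -> z \in s) ->
  forall n (y : X), (count (fun w => (y <= w)%O) s <= n)%N -> y < x ->
  exists c, y <= c /\ covers c x.
Proof.
move=> hs; elim=> [|n IH] y hc yx.
  have : (0 < count (fun w => (y <= w)%O) s)%N.
    by rewrite -has_count; apply/hasP; exists y => //; apply: hs; apply: ltW.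
  by rewrite lt0n; move: hc; rewrite leqn0 => ->.
case: (classic (exists z, y < z /\ z < x)) => [[z [yz zx]]|nz].
  have hlt : (count (fun w => (z <= w)%O) s < count (fun w => (y <= w)%O) s)%N.
    apply: (@count_lt _ _ _ _ y) => //=.
    - by move=> w zw; apply: le_trans zw; apply: ltW.
    - by apply: hs; apply: ltW.
    - by rewrite lt_geF.
  have [c [zc cx]] := IH z (leq_trans (hlt : (_ < _)%N) hc) zx.
  by exists c; split => //; apply: le_trans zc; apply: ltW.
by exists y; split.
Qed.

Theorem theorem2 (d : Order.disp_t) (X : porderType d)
  (d' : Order.disp_t) (L : tbOrderType d')
  (zero : X) (hzero : forall x : X, zero <= x)
  (hlf : locally_finite X)
  (g : X -> L) (hg : isotone g) :
  forall f : X -> L,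
    (forall x : X, join_below f x (g x)) <->
    (forall x : X, m_lower g x <= f x /\ f x <= m_upper g x).
Proof.
have down : forall x : X, exists s : seq X, forall z, z <= x -> z \in s.
  move=> x; have [s hs] := hlf zero x; exists s => z zx; apply: hs.
  by rewrite hzero zx.
move=> f; split.
  move=> H.
  have fg : forall y, f y <= g y.
    move=> y; have [s hs] := down y; rewrite (H y s hs).
    by apply: joins_sup_seq => //; apply: hs.
  move=> x; have [s0 hs0] := down x; have gx := H x s0 hs0.
  split; last by rewrite /m_upper.
  rewrite /m_lower; destruct (excluded_middle_informative _) as [hc|nhc]; last exact: le0x.
  case: (leP (g x) (f x)) => // hlt.
  have : \join_(y <- s0 | y <= x) f y < g x.
    apply: (big_ind (fun v => v < g x)).
    - exact: le_lt_trans (le0x (f x)) hlt.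
    - by move=> a b ha hb; rewrite ltUx ha hb.
    - move=> i ix; case: (eqVneq i x) => [->//|nix].
      have ilt : i < x by rewrite lt_neqAle nix ix.
      have [c [ic cx]] := @cover_exists _ _ x s0 hs0 _ i (leqnn _) ilt.
      apply: le_lt_trans (fg i) _; apply: le_lt_trans (hg _ _ ic) _.
      exact: hc.
  by rewrite -gx ltxx.
move=> H x s hs; apply/eqP; rewrite eq_le; apply/andP; split; last first.
  apply: joins_le => y yx; apply: le_trans (hg _ _ yx).
  by have [_ h] := H y; exact: h.
have [s0 hs0] := down x.
suff: forall n y, (count (fun w => (w <= y)%O) s0 <= n)%N -> y <= x ->
   g y <= \join_(z <- s | z <= y) f z by move/(_ _ x (leqnn _) (lexx x)).
elim=> [|n IH] y hc yx.
  have : (0 < count (fun w => (w <= y)%O) s0)%N.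
    by rewrite -has_count; apply/hasP; exists y => //; apply: hs0.
  by rewrite lt0n; move: hc; rewrite leqn0 => ->.
have [hl _] := H y; move: hl; rewrite /m_lower.
destruct (excluded_middle_informative _) as [hc'|nc]; [move=> gf | move=> _].
  apply: le_trans gf _; apply: joins_sup_seq => //.
  by apply: hs.
have [c hcn] := not_all_ex_not _ _ nc; have [cov ngc] := imply_to_and _ _ hcn.
have gyc : g y <= g c by rewrite leNgt; apply/negP.
have cy : c < y by case: cov.
have hlt : (count (fun w => (w <= c)%O) s0 < count (fun w => (w <= y)%O) s0)%N.
  apply: (@count_lt _ _ _ _ y) => //=.
  - by move=> w wc; apply: le_trans wc (ltW cy).
  - by apply: hs0.
  - by rewrite lt_geF.
have cx : c <= x := le_trans (ltW cy) yx.
apply: le_trans gyc _; apply: le_trans (IH c (leq_trans hlt hc) cx) _.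
apply/joinsP_seq => z zs zc; apply: joins_sup_seq => //.
exact: le_trans zc (ltW cy).
Qed.
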